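(* Every discrete loss $\ell:\mathcal{R}\to\mathbb{R}^{\mathcal{Y}}_+$ is embedded by some polyhedral loss $L:\mathbb{R}^d\to\mathbb{R}^{\mathcal{Y}}_+$ (for some $d$).
   Context: $\mathcal{Y}$ is a finite set of labels; $\mathbb{R}^{\mathcal{Y}}_+$ is the nonnegative orthant; $\Delta_{\mathcal{Y}}$ is the probability simplex on $\mathcal{Y}$. A loss is a map $L:\mathcal{R}\to\mathbb{R}^{\mathcal{Y}}_+$; expected loss under $p$ is $\langle p,L(r)\rangle$. A loss is discrete if $\mathcal{R}$ is finite. $L:\mathbb{R}^d\to\mathbb{R}^{\mathcal{Y}}_+$ is polyhedral if each coordinate $u\mapsto L(u)_y$ is a pointwise maximum of finitely many affine functions. $L$ is minimizable if $\inf_r\langle p,L(r)\rangle$ is attained for all $p$; then $\mathrm{prop}[L](p)=\arg\min_r\langle p,L(r)\rangle$. $\mathcal{S}\subseteq\mathcal{R}$ is representative for minimizable $L$ if $\mathrm{prop}[L](p)\cap\mathcal{S}\neq\emptyset$ for all $p\in\Delta_{\mathcal{Y}}$. A minimizable $L:\mathbb{R}^d\to\mathbb{R}^{\mathcal{Y}}_+$ embeds $\ell$ if there exist a representative set $\mathcal{S}$ for $\ell$ and an injective $\varphi:\mathcal{S}\to\mathbb{R}^d$ with (i) $L(\varphi(r))=\ell(r)$ for all $r\in\mathcal{S}$ and (ii) for all $p$ and $r\in\mathcal{S}$: $r\in\mathrm{prop}[\ell](p)\iff\varphi(r)\in\mathrm{prop}[L](p)$. *)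

(* Defs.v *)
From HB Require Import structures.
From mathcomp Require Import all_boot all_order all_algebra.
From mathcomp Require Import reals.
Set Implicit Arguments. Unset Strict Implicit. Unset Printing Implicit Defensive.
Import Order.TTheory GRing.Theory Num.Theory.
Local Open Scope ring_scope.

Section Defs.
Variable R : realType.
Variable Y : finType.

Definition simplex (p : Y -> R) : Prop :=
  (forall y, 0 <= p y) /\ \sum_(y : Y) p y = 1.

Definition exp_loss (Rep : Type) (L : Rep -> Y -> R) (p : Y -> R) (r : Rep) : R :=
  \sum_(y : Y) p y * L r y.

Definition nonneg_loss (Rep : Type) (L : Rep -> Y -> R) : Prop :=
  forall r y, 0 <= L r y.

Definition minimizable (Rep : Type) (L : Rep -> Y -> R) : Prop :=
  forall p, simplex p -> exists r, forall r', exp_loss L p r <= exp_loss L p r'.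

Definition prop (Rep : Type) (L : Rep -> Y -> R) (p : Y -> R) (r : Rep) : Prop :=
  forall r', exp_loss L p r <= exp_loss L p r'.

Definition representative (Rep : Type) (L : Rep -> Y -> R) (S : Rep -> Prop) : Prop :=
  forall p, simplex p -> exists r, S r /\ prop L p r.

(* L : R^d -> R^Y is polyhedral: each coordinate is a pointwise maximum of
   finitely many (at least one) affine functions u |-> <a_i, u> + b_i *)
Definition polyhedral (d : nat) (L : 'rV[R]_d -> Y -> R) : Prop :=
  forall y, exists (n : nat) (a : 'I_n.+1 -> 'rV[R]_d) (b : 'I_n.+1 -> R),
    forall u : 'rV[R]_d,
      (forall i, \sum_(j < d) a i 0 j * u 0 j + b i <= L u y) /\
      (exists i, L u y = \sum_(j < d) a i 0 j * u 0 j + b i).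

Definition embeds (d : nat) (L : 'rV[R]_d -> Y -> R) (Rep : Type) (l : Rep -> Y -> R)
  : Prop :=
  minimizable L /\
  exists (S : Rep -> Prop) (phi : Rep -> 'rV[R]_d),
    representative l S /\
    (forall r1 r2, S r1 -> S r2 -> phi r1 = phi r2 -> r1 = r2) /\
    (forall r, S r -> L (phi r) = l r) /\
    (forall p r, simplex p -> S r -> (prop l p r <-> prop L p (phi r))).
End Defs.

(* Main.v *)
Require Import Defs.
From HB Require Import structures.
From mathcomp Require Import all_boot all_order all_algebra.
From mathcomp Require Import reals.
From mathcomp Require Import ring lra.
From Stdlib Require Import FunctionalExtensionality.
Import Order.TTheory GRing.Theory Num.Theory.
Local Open Scope ring_scope.

Definition negp {R : realType} (x : R) : R := if x < 0 then - x else 0.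

Definition hpen {R : realType} {d : nat} (u : 'rV[R]_d) : R :=
  \sum_(j < d) negp (u 0 j) + `|1 - \sum_(j < d) u 0 j|.

Lemma negp_ge0 (R : realType) (x : R) : 0 <= negp x.
Proof. rewrite /negp; case: ifP => h //; lra. Qed.

Lemma core (R : realType) (d : nat) (u : 'rV[R]_d) (a : 'I_d -> R) (m M : R) :
  0 <= m -> m <= M -> (forall j, m <= a j) -> (forall j, a j <= M) ->
  m <= \sum_(j < d) u 0 j * a j + M * hpen u.
Proof.
move=> m0 mM ha hM.
have step : forall j, m * u 0 j - M * negp (u 0 j) <= u 0 j * a j.
  move=> j; rewrite /negp; case: ifP => h.
  - have := ha j; have := hM j; nra.
  - have := ha j; have := hM j; move: h => /negbT; rewrite -leNgt => h; nra.
have s1 : \sum_(j < d) (m * u 0 j - M * negp (u 0 j)) <= \sum_(j < d) u 0 j * a j.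
  by apply: ler_sum => j _; apply: step.
move: s1; rewrite big_split /= sumrN -!mulr_sumr /hpen.
set s := \sum_(j < d) u 0 j; set N := \sum_(j < d) negp (u 0 j).
have h1 : 1 - s <= `|1 - s| by apply: ler_norm.
have h2 : 0 <= `|1 - s| by [].
nra.
Qed.

Lemma fin_min (R : realType) (T : finType) (t0 : T) (f : T -> R) :
  exists t, forall t', f t <= f t'.
Proof.
case: (@arg_minP _ R T t0 predT f isT) => t _ H.
by exists t => t'; apply: H.
Qed.

Lemma poly_gen (R : realType) (d : nat) (K : finType) (k0 : K)
  (A : K -> 'rV[R]_d) (B : K -> R) (F : 'rV[R]_d -> R) :
  (forall u : 'rV[R]_d, (forall k, \sum_(j < d) A k 0 j * u 0 j + B k <= F u) /\
             exists k, F u = \sum_(j < d) A k 0 j * u 0 j + B k) ->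
  exists (n : nat) (a : 'I_n.+1 -> 'rV[R]_d) (b : 'I_n.+1 -> R),
    forall u : 'rV[R]_d,
      (forall i, \sum_(j < d) a i 0 j * u 0 j + b i <= F u) /\
      (exists i, F u = \sum_(j < d) a i 0 j * u 0 j + b i).
Proof.
move=> H.
have cK : #|K| = (#|K|.-1).+1.
  by rewrite prednK // (cardD1 k0).
exists (#|K|.-1), (fun i => A (nth k0 (enum K) i)), (fun i => B (nth k0 (enum K) i)).
move=> u; split.
  by move=> i; case: (H u) => H1 _; apply: H1.
case: (H u) => _ [k Hk].
have hi : (index k (enum K) < (#|K|.-1).+1)%N.
  by rewrite -cK cardE index_mem mem_enum.
exists (inord (index k (enum K))).
by rewrite inordK // nth_index ?mem_enum.
Qed.

Theorem theorem4 (R : realType) (Y : finType) (Rep : finType) (r0 : Rep)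
    (l : Rep -> Y -> R) (hl : nonneg_loss l) :
  exists (d : nat) (L : 'rV[R]_d -> Y -> R),
    nonneg_loss L /\ polyhedral L /\ embeds L l.
Proof.
pose M : R := \sum_(r : Rep) \sum_(y : Y) l r y.
pose L := fun (u : 'rV[R]_#|Rep|) (y : Y) =>
  \sum_(j < #|Rep|) u 0 j * l (enum_val j) y + M * hpen u.
pose phi := fun r : Rep => (\row_(j < #|Rep|) ((j == enum_rank r)%:R : R)).
have hM : forall r y, l r y <= M.
  move=> r y; apply: (@le_trans _ _ (\sum_(y : Y) l r y)).
    by rewrite (bigD1 y) //= lerDl sumr_ge0.
  by rewrite /M (bigD1 r) //= lerDl sumr_ge0 // => i _; apply: sumr_ge0.
have M0 : 0 <= M by apply: sumr_ge0 => r _; apply: sumr_ge0.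
have expge0 : forall p r, simplex p -> 0 <= exp_loss l p r.
  by move=> p r [hp _]; apply: sumr_ge0 => y _; apply: mulr_ge0.
have expleM : forall p r, simplex p -> exp_loss l p r <= M.
  move=> p r [hp hs]; rewrite /exp_loss.
  apply: (@le_trans _ _ (\sum_(y : Y) p y * M)).
    by apply: ler_sum => y _; apply: ler_wpM2l.
  by rewrite -mulr_suml hs mul1r.
have expL : forall p u, simplex p -> exp_loss L p u =
    \sum_(j < #|Rep|) u 0 j * exp_loss l p (enum_val j) + M * hpen u.
  move=> p u [hp hs]; rewrite /exp_loss /L.
  under eq_bigr do rewrite mulrDr.
  rewrite big_split /= -mulr_suml hs mul1r; congr (_ + _).
  under eq_bigr do rewrite mulr_sumr.
  rewrite exchange_big /=; apply: eq_bigr => j _; rewrite mulr_sumr.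
  by apply: eq_bigr => y _; rewrite mulrCA.
have Lphi : forall r, L (phi r) = l r.
  move=> r; apply: functional_extensionality => y; rewrite /L /phi /hpen.
  rewrite (bigD1 (enum_rank r)) //= big1; last first.
    by move=> j /negbTE hj; rewrite mxE hj mul0r.
  rewrite (bigD1 (enum_rank r)) //= big1; last first.
    by move=> j /negbTE hj; rewrite mxE hj /negp ltxx.
  rewrite (bigD1 (enum_rank r)) //= big1; last first.
    by move=> j /negbTE hj; rewrite mxE hj.
  by rewrite !mxE eqxx enum_rankK /negp ltr10 !addr0 mul1r /= subrr normr0 add0r mulr0 addr0.
have eL : forall p r, exp_loss L p (phi r) = exp_loss l p r.
  by move=> p r; rewrite /exp_loss; under eq_bigr do rewrite Lphi.
have Lge : forall p u, simplex p -> forall r, (forall r', exp_loss l p r <= exp_loss l p r') ->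
    exp_loss l p r <= exp_loss L p u.
  move=> p u hp r hr; rewrite expL //; apply: core.
  - exact: expge0.
  - exact: expleM.
  - by move=> j; apply: hr.
  - by move=> j; apply: expleM.
exists #|Rep|, L; split.
  move=> u y.
  apply: (@core R #|Rep| u (fun j => l (enum_val j) y) 0 M).
  - by [].
  - exact: M0.
  - by move=> j; apply: hl.
  - by move=> j; apply: hM.
split.
  move=> y.
  pose A := fun k : {set 'I_#|Rep|} * bool =>
    \row_(j < #|Rep|) (l (enum_val j) y - M * (j \in k.1)%:R -
                        M * (if k.2 then 1 else -1)).
  pose B := fun k : {set 'I_#|Rep|} * bool => M * (if k.2 then 1 else -1).
  apply: (@poly_gen R #|Rep| _ (set0, true) A B) => u.
  have idk : forall k, \sum_(j < #|Rep|) A k 0 j * u 0 j + B k =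
     \sum_(j < #|Rep|) u 0 j * l (enum_val j) y +
     M * (\sum_(j < #|Rep|) (j \in k.1)%:R * (- u 0 j) +
          (if k.2 then 1 else -1) * (1 - \sum_(j < #|Rep|) u 0 j)).
    move=> [T b]; rewrite /A /B /=.
    set g : R := (if b then 1 else -1).
    have -> : \sum_(j < #|Rep|) u 0 j * l (enum_val j) y +
     M * (\sum_(j < #|Rep|) (j \in T)%:R * (- u 0 j) + g * (1 - \sum_(j < #|Rep|) u 0 j))
      = \sum_(j < #|Rep|) (u 0 j * l (enum_val j) y + M * ((j \in T)%:R * (- u 0 j))
            - M * g * u 0 j) + M * g.
      rewrite !big_split /= sumrN -!mulr_sumr; ring.
    congr (_ + _); apply: eq_bigr => j _; rewrite mxE; ring.
  split.
    move=> k; rewrite idk /L lerD2l; apply: ler_wpM2l => //.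
    rewrite /hpen; apply: lerD.
      apply: ler_sum => j _; rewrite /negp.
      case: (j \in k.1); case: ifP => h; rewrite ?mul1r ?mul0r //.
      - by rewrite oppr_le0; move/negbT: h; rewrite -leNgt.
      - by rewrite oppr_ge0 ltW.
    case: (k.2); rewrite ?mul1r ?mulN1r.
      exact: ler_norm.
    by rewrite -normrN ler_norm.
  exists ([set j | u 0 j < 0], 0 <= 1 - \sum_(j < #|Rep|) u 0 j).
  rewrite idk /L /hpen /=; congr (_ + M * (_ + _)).
    by apply: eq_bigr => j _; rewrite inE /negp; case: (u 0 j < 0); rewrite /= ?mul1r ?mul0r.
  case: ifP => h; rewrite ?mul1r ?mulN1r.
    by rewrite ger0_norm.
  by rewrite ltr0_norm // ltNge h.
split.
  move=> p hp.
  have [r hr] := @fin_min R _ r0 (exp_loss l p).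
  exists (phi r) => u; rewrite eL; exact: Lge.
exists (fun _ => True), phi; split.
  move=> p hp; have [r hr] := @fin_min R _ r0 (exp_loss l p).
  by exists r.
split.
  move=> r1 r2 _ _ e.
  have := congr1 (fun v : 'rV[R]_#|Rep| => v 0 (enum_rank r1)) e.
  rewrite /phi !mxE eqxx /=; case: eqP => [/enum_rank_inj //|_].
  by move/eqP; rewrite oner_eq0.
split; first by move=> r _; apply: Lphi.
move=> p r hp _; split.
  move=> hr u; rewrite eL; exact: Lge.
move=> hr r'; have := hr (phi r'); by rewrite !eL.
Qed.
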